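(* (i) Let $(p,q)$ satisfy $\frac2p+\frac1q=1$, $1\le q<\infty$, and let $\beta>\frac{2q}{q+1}$. Then there is no constant $C$ such that for all $N\ge1$, all $\lambda\in\ell^\beta$ and all orthonormal systems $(f_j)$ in $L^2(\mathbf T)$ one has $\|\sum_j\lambda_j|\mathscr D_Nf_j|^2\|_{L^p_tL^q_x(\mathbf T\times\mathbf T)}\le CN^{1/p}\|\lambda\|_{\ell^\beta}$. (ii) Let $\beta>2$. Then there is no constant $C$ such that for all $N\ge1$, all $\lambda\in\ell^\beta$ and all orthonormal systems $(f_j)$ in $L^2(\mathbf T)$ one has $\|\sum_j\lambda_j|\mathscr D_Nf_j|^2\|_{L^2_tL^\infty_x(\mathbf T\times\mathbf T)}\le CN^{1/2}\|\lambda\|_{\ell^\beta}$.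
   Context: $\mathbf T=[0,2\pi)$, $S_N=\mathbb Z\cap[-N,N]$, $\mathscr F_xf(k)=\frac1{2\pi}\int_{\mathbf T}e^{-ixk}f(x)\,dx$, and $\mathscr D_Nf(t,x)=\frac1{2\pi}\sum_{n\in S_N}\mathscr F_xf(n)e^{i(xn+t\sqrt{n^2+n^4})}$. *)

(* Defs.v *)
From HB Require Import structures.
From mathcomp Require Import all_boot all_order all_algebra.
From mathcomp Require Import all_classical all_reals all_analysis.
From mathcomp Require Export complex.
Import Order.TTheory GRing.Theory Num.Theory.
Import numFieldNormedType.Exports.

Set Implicit Arguments.
Unset Strict Implicit.
Unset Printing Implicit Defensive.

Local Open Scope classical_set_scope.
Local Open Scope ring_scope.
Local Open Scope complex_scope.

Section Defs.
Variable R : realType.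

Definition Tset : set R := `[0%R, 2 * pi[.

Lemma measurable_Tset : measurable Tset.
Proof. exact: measurable_itv. Qed.

Definition muT : {measure set _ -> \bar R} :=
  mrestr (@lebesgue_measure R) measurable_Tset.

Definition cabs (z : R[i]) : R := ComplexField.Normc.normc z.

Definition cexpi (th : R) : R[i] := (cos th) +i* (sin th).

Definition cint (g : R -> R[i]) : R[i] :=
  (\int[@lebesgue_measure R]_(x in Tset) complex.Re (g x)) +i*
  (\int[@lebesgue_measure R]_(x in Tset) complex.Im (g x)).

Definition L2T (f : R -> R[i]) : Prop :=
  [/\ measurable_fun Tset (fun x => complex.Re (f x)),
      measurable_fun Tset (fun x => complex.Im (f x)) &
      (\int[@lebesgue_measure R]_(x in Tset) ((cabs (f x)) ^+ 2)%:E < +oo)%E].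

Definition l2_inner (f g : R -> R[i]) : R[i] := cint (fun x => f x * (g x)^*).

Definition orthonormal_system (f : nat -> R -> R[i]) : Prop :=
  (forall j, L2T (f j)) /\
  (forall j k, l2_inner (f j) (f k) = (j == k)%:R).

Definition fourier (f : R -> R[i]) (n : int) : R[i] :=
  ((2 * pi)^-1)%:C * cint (fun x => cexpi (- (x * n%:~R)) * f x).

Definition omega (n : int) : R := Num.sqrt (n%:~R ^+ 2 + n%:~R ^+ 4).

(* D_N f (t, x) = 1/(2 pi) sum_{|n| <= N} F f(n) e^{i(xn + t omega n)};
   the index k < 2N+1 encodes n = k - N in S_N = Z \cap [-N, N]. *)
Definition DN (N : nat) (f : R -> R[i]) (t x : R) : R[i] :=
  ((2 * pi)^-1)%:C *
  \sum_(k < (2 * N).+1)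
     (fourier f (k%:Z - N%:Z) *
      cexpi (x * (k%:Z - N%:Z)%:~R + t * omega (k%:Z - N%:Z))).

Definition csum (u : nat -> R[i]) : R[i] :=
  (limn (series (fun j => complex.Re (u j)))) +i*
  (limn (series (fun j => complex.Im (u j)))).

Definition density (N : nat) (lam : nat -> R[i]) (f : nat -> R -> R[i])
    (t x : R) : R[i] :=
  csum (fun j => lam j * ((cabs (DN N (f j) t x)) ^+ 2)%:C).

(* sum_j |lambda_j|^beta (in [0, +oo]); lambda in l^beta iff it is finite *)
Definition lpow_sum (beta : R) (lam : nat -> R[i]) : \bar R :=
  (\sum_(j <oo) ((cabs (lam j)) `^ beta)%:E)%E.

Definition lnorm (beta : R) (lam : nat -> R[i]) : \bar R :=
  ((lpow_sum beta lam) `^ beta^-1)%E.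

Definition mixed_norm (p q : \bar R) (F : R -> R -> R) : \bar R :=
  Lnorm muT p (fun t => Lnorm muT q (fun x => (F t x)%:E)).

Definition recip (p : \bar R) : R :=
  match p with
  | r%:E => r^-1
  | _ => 0
  end.

End Defs.

(* Main.v *)
Require Import Defs.
From HB Require Import structures.
From mathcomp Require Import all_boot all_order all_algebra.
From mathcomp Require Import all_classical all_reals all_analysis.
From mathcomp Require Import complex.
From mathcomp Require Import ring lra zify.
From Stdlib Require Import Lia.
Import Order.TTheory GRing.Theory Num.Theory.
Import numFieldNormedType.Exports.
Local Open Scope classical_set_scope.
Local Open Scope ring_scope.

Local Open Scope complex_scope.
Section S.
Variable R : realType.
Notation mu := (@lebesgue_measure R).
Lemma is_derive_sinM (m x : R) : is_derive x 1 (fun y => sin (y * m)) (cos (x * m) * m).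
Proof.
have dl : derivable (fun y : R => y * m) x 1.
  apply: derivableM; [exact: derivable_id | exact: derivable_cst].
have ds : derivable (@sin R) (x * m) 1 by apply: ex_derive.
apply: DeriveDef.
  apply/derivable1_diffP.
  apply: differentiable_comp; [exact/derivable1_diffP|exact/derivable1_diffP].
rewrite -derive1E.
rewrite (@derive1_comp _ (fun y : R => y * m) (@sin R)) //.
rewrite !derive1E derive_val.
have -> : 'D_1 (fun y : R => y * m) x = m.
  have h : is_derive x 1 ((@id R) * (cst m)) (x *: 0 + m *: 1).
    by apply: is_deriveM.
  have -> : (fun y : R => y * m) = ((@id R) * (cst m)) by apply/funext.
  rewrite derive_val scaler0 add0r. by rewrite /GRing.scale /= mulr1.
by [].
Qed.
Lemma sin2pi_int (m : int) : sin (2 * pi * m%:~R) = 0 :> R.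
Proof.
have hn (n : nat) : sin (2 * pi * n%:R) = 0 :> R.
  have := periodicn (@sinD2pi R) n 0; rewrite sin0 => <-; congr sin.
  by rewrite add0r -mulrnA -[RHS]mulr_natr natrM; ring.
case: m => n.
  by rewrite hn.
by rewrite NegzE mulrNz mulrN sinN hn oppr0.
Qed.

Lemma cos2pi_int (m : int) : cos (2 * pi * m%:~R) = 1 :> R.
Proof.
have hn (n : nat) : cos (2 * pi * n%:R) = 1 :> R.
  have := periodicn (@cosD2pi R) n 0; rewrite cos0 => h; rewrite -[RHS]h; congr cos.
  by rewrite add0r -mulrnA -[RHS]mulr_natr natrM; ring.
case: m => n.
  by rewrite hn.
by rewrite NegzE mulrNz mulrN cosN hn.
Qed.

Lemma is_derive_cosM (m x : R) : is_derive x 1 (fun y => cos (y * m)) (- sin (x * m) * m).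
Proof.
have dl : derivable (fun y : R => y * m) x 1.
  apply: derivableM; [exact: derivable_id | exact: derivable_cst].
have ds : derivable (@cos R) (x * m) 1 by apply: ex_derive.
apply: DeriveDef.
  apply/derivable1_diffP.
  apply: differentiable_comp; [exact/derivable1_diffP|exact/derivable1_diffP].
rewrite -derive1E.
rewrite (@derive1_comp _ (fun y : R => y * m) (@cos R)) //.
rewrite !derive1E derive_val.
have -> : 'D_1 (fun y : R => y * m) x = m.
  have h : is_derive x 1 ((@id R) * (cst m)) (x *: 0 + m *: 1).
    by apply: is_deriveM.
  have -> : (fun y : R => y * m) = ((@id R) * (cst m)) by apply/funext.
  rewrite derive_val scaler0 add0r. by rewrite /GRing.scale /= mulr1.
by [].
Qed.

Lemma der_cont (f : R -> R) : (forall x, derivable f x 1) -> continuous f.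
Proof. by move=> d x; apply/differentiable_continuous/derivable1_diffP. Qed.

Lemma cont_cosM (c m : R) : continuous (fun y : R => c * cos (y * m)).
Proof.
apply: der_cont => x.
have := is_deriveZ c (is_derive_cosM m x).
by case.
Qed.

Lemma cont_sinM (c m : R) : continuous (fun y : R => c * sin (y * m)).
Proof.
apply: der_cont => x.
have := is_deriveZ c (is_derive_sinM m x).
by case.
Qed.

Lemma leb_Tset : mu (@Tset R) = (2 * pi)%:E.
Proof.
rewrite /Tset lebesgue_measure_itv /= lte_fin mulr_gt0 ?pi_gt0 //.
by rewrite sube0.
Qed.

Lemma int_cos (c : R) (m : int) :
  (\int[mu]_(x in @Tset R) (c * cos (x * m%:~R))%:E =
   (if m == 0 then c * (2 * pi) else 0)%:E)%E.
Proof.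
have pi2 : 0 < 2 * pi :> R by rewrite mulr_gt0 // pi_gt0.
have [->|m0] := eqVneq m 0.
  under eq_integral do rewrite mulr0 cos0 mulr1.
  rewrite (@integral_cst _ _ _ mu _ (@measurable_Tset R)) EFinM; congr (_ * _)%E; exact: leb_Tset.
set M : R := m%:~R.
have M0 : M != 0 by rewrite intr_eq0.
rewrite /Tset integral_itv_bndo_bndc; last first.
  apply/measurable_realfun.measurable_EFinP.
  exact: (measurable_funTS (measurable_realfun.continuous_measurable_fun (cont_cosM c M))).
rewrite (@continuous_FTC2 _ _ (fun x => c / M * sin (x * M))) //.
- by rewrite /M sin2pi_int mulr0 mul0r sin0 mulr0 -EFinB subrr.
- exact/continuous_subspaceT/cont_cosM.
- split.
  + move=> x _; have := is_deriveZ (c / M) (is_derive_sinM M x); by case.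
  + by apply: cvg_at_right_filter; exact: cont_sinM.
  + by apply: cvg_at_left_filter; exact: cont_sinM.
- move=> x _; rewrite derive1E.
  have := is_deriveZ (c / M) (is_derive_sinM M x) => h.
  rewrite (@derive_val _ _ _ _ _ _ _ h).
  rewrite /GRing.scale /=. field. done.
Qed.

Lemma int_sin (c : R) (m : int) :
  (\int[mu]_(x in @Tset R) (c * sin (x * m%:~R))%:E = 0%:E)%E.
Proof.
have pi2 : 0 < 2 * pi :> R by rewrite mulr_gt0 // pi_gt0.
have [->|m0] := eqVneq m 0.
  under eq_integral do rewrite mulr0 sin0 mulr0.
  by rewrite integral0.
set M : R := m%:~R.
have M0 : M != 0 by rewrite intr_eq0.
rewrite /Tset integral_itv_bndo_bndc; last first.
  apply/measurable_realfun.measurable_EFinP.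
  exact: (measurable_funTS (measurable_realfun.continuous_measurable_fun (cont_sinM c M))).
rewrite (@continuous_FTC2 _ _ (fun x => (- c) / M * cos (x * M))) //.
- by rewrite /M cos2pi_int mul0r cos0 -EFinB subrr.
- exact/continuous_subspaceT/cont_sinM.
- split.
  + move=> x _; have := is_deriveZ ((- c) / M) (is_derive_cosM M x); by case.
  + by apply: cvg_at_right_filter; exact: cont_cosM.
  + by apply: cvg_at_left_filter; exact: cont_cosM.
- move=> x _; rewrite derive1E.
  have := is_deriveZ ((- c) / M) (is_derive_cosM M x) => h.
  rewrite (@derive_val _ _ _ _ _ _ _ h).
  rewrite /GRing.scale /=. field. done.
Qed.

Lemma muT_setT : muT R [set: R] = (2 * pi)%:E.
Proof. by rewrite /muT /= /mrestr setTI leb_Tset. Qed.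

Lemma pi2_gt0 : 0 < 2 * pi :> R.
Proof. by rewrite mulr_gt0 // pi_gt0. Qed.

Lemma pi2_ge1 : 1 <= 2 * pi :> R.
Proof. have := @pi_ge2 R. lra. Qed.

Lemma Lnorm_cst_ge (p : \bar R) (V : R) : (0 < p)%E -> 0 <= V ->
  exists w : R, Lnorm (muT R) p (fun _ => V%:E) = w%:E /\ V <= w.
Proof.
move=> p0 V0.
case: p p0 => [r| |] //= p0.
- rewrite lte_fin in p0.
  rewrite unlock /=.
  under eq_integral do rewrite /= (ger0_norm V0).
  rewrite (@integral_cst _ _ _ (muT R) _ measurableT) muT_setT -EFinM poweR_EFin.
  eexists; split; first reflexivity.
  have hV : V = (V `^ r) `^ r^-1.
    by rewrite -powRrM divff ?gt_eqF // powRr1.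
  rewrite {1}hV.
  apply: ge0_ler_powR.
  + by rewrite invr_ge0 ltW.
  + by rewrite nnegrE powR_ge0.
  + by rewrite nnegrE mulr_ge0 ?powR_ge0 // ltW // pi2_gt0.
  + by rewrite -[leLHS]mulr1 ler_wpM2l ?powR_ge0 // pi2_ge1.
- rewrite unlock /= muT_setT lte_fin pi2_gt0.
  exists V; split => //.
  apply: ess_sup_inf.ess_sup_ae_cst; first by rewrite muT_setT lte_fin pi2_gt0.
  by apply: nearW => x /=; rewrite ger0_norm.
Qed.
Lemma mulcE (a b c d : R) : (a +i* b) * (c +i* d) = (a * c - b * d) +i* (a * d + b * c).
Proof. by []. Qed.

Lemma conjcE (a b : R) : (a +i* b)^* = a +i* (- b).
Proof. by []. Qed.

Lemma cabs2 (a b : R) : cabs (a +i* b) ^+ 2 = a ^+ 2 + b ^+ 2.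
Proof. rewrite /cabs /=. by rewrite sqr_sqrtr // addr_ge0 // sqr_ge0. Qed.

Lemma cabs_real (a : R) : 0 <= a -> cabs (a +i* 0) = a.
Proof. move=> a0; rewrite /cabs /= expr0n /= addr0 sqrtr_sqr ger0_norm //. Qed.

Lemma ReC (a : R) : (a%:C : R[i]) = a +i* 0.
Proof. by []. Qed.


Lemma cint_trig (c : R) (m : int) (g : R -> R[i]) :
  (forall x, g x = (c * cos (x * m%:~R)) +i* (c * sin (x * m%:~R))) ->
  cint g = (if m == 0 then c * (2 * pi) else 0) +i* 0.
Proof.
move=> hg; rewrite /cint /Rintegral.
have -> : (fun x => (complex.Re (g x))%:E) = (fun x => (c * cos (x * m%:~R))%:E).
  by apply/funext => x; rewrite hg.
have -> : (fun x => (complex.Im (g x))%:E) = (fun x => (c * sin (x * m%:~R))%:E).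
  by apply/funext => x; rewrite hg.
by rewrite int_cos int_sin.
Qed.

Definition aa : R := Num.sqrt ((2 * pi)^-1).

Lemma aa2 : aa * aa = (2 * pi)^-1.
Proof. by rewrite -expr2 sqr_sqrtr // invr_ge0 ltW // pi2_gt0. Qed.

Lemma aa_ge0 : 0 <= aa.
Proof. exact: sqrtr_ge0. Qed.

Definition ef (k : int) (x : R) : R[i] :=
  (aa * cos (x * k%:~R)) +i* (aa * sin (x * k%:~R)).

Lemma ef_conj (k l : int) x :
  ef k x * (ef l x)^* = (aa * aa * cos (x * (k - l)%:~R)) +i* (aa * aa * sin (x * (k - l)%:~R)).
Proof.
transitivity (((aa * cos (x * k%:~R)) +i* (aa * sin (x * k%:~R))) * ((aa * cos (x * l%:~R)) +i* (- (aa * sin (x * l%:~R))))); first by [].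
rewrite mulcE rmorphB /= mulrBr cosB sinB.
congr (_ +i* _); ring.
Qed.

Lemma cexpi_ef (n k : int) x :
  cexpi (- (x * n%:~R)) * ef k x = (aa * cos (x * (k - n)%:~R)) +i* (aa * sin (x * (k - n)%:~R)).
Proof.
rewrite /ef /cexpi mulcE rmorphB /= mulrBr cosB sinB cosN sinN.
congr (_ +i* _); ring.
Qed.

Lemma l2_inner_ef (k l : int) : l2_inner (ef k) (ef l) = ((k == l)%:R : R) +i* 0.
Proof.
rewrite /l2_inner (@cint_trig (aa * aa) (k - l)); last by move=> x; rewrite ef_conj.
rewrite subr_eq0; case: (k == l) => //.
by rewrite aa2 mulVf // gt_eqF // pi2_gt0.
Qed.

Lemma fourier_ef (k n : int) : fourier (ef k) n = ((k == n)%:R * aa) +i* 0.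
Proof.
rewrite /fourier (@cint_trig aa (k - n)); last by move=> x; rewrite cexpi_ef.
rewrite subr_eq0; case: (k == n); rewrite mulcE /=.
  by rewrite !mul0r !mulr0 subr0 addr0 mul1r mulrCA mulVf ?mulr1 // gt_eqF // pi2_gt0.
by rewrite !mul0r !mulr0 subr0 addr0.
Qed.

Lemma L2T_ef k : L2T (ef k).
Proof.
split.
- exact: (measurable_funTS (measurable_realfun.continuous_measurable_fun (cont_cosM aa k%:~R))).
- exact: (measurable_funTS (measurable_realfun.continuous_measurable_fun (cont_sinM aa k%:~R))).
- have -> : (fun x => ((cabs (ef k x)) ^+ 2)%:E) = (fun x : R => (aa * aa)%:E).
    apply/funext => x; rewrite /ef cabs2 !exprMn -mulrDr cos2Dsin2 mulr1 expr2 //.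
  rewrite (@integral_cst _ _ _ mu _ (@measurable_Tset R)).
  rewrite (_ : (_ * _)%E = ((aa * aa) * (2 * pi))%:E); first exact: ltry.
  by rewrite [RHS]EFinM; congr (_ * _)%E; exact: leb_Tset.
Qed.


Lemma limn_series_fin (u : nat -> R) M : (forall j, (M <= j)%N -> u j = 0) ->
  limn (series u) = \sum_(0 <= j < M) u j.
Proof.
move=> h; apply: lim_near_cst => //.
near=> n.
have nM : (M <= n)%N by near: n; exists M.
rewrite /series /= (@big_cat_nat _ _ _ M 0 n _ _ (leq0n M) nM) /=.
have -> : \sum_(M <= j < n) u j = 0.
  by rewrite big_nat_cond big1 // => j /andP[/andP[Mj _] _]; apply: h.
by rewrite addr0.
Unshelve. all: by end_near.
Qed.

Lemma elimn_fin (u : nat -> \bar R) M : (forall j, (M <= j)%N -> u j = 0%E) ->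
  limn (fun n => (\sum_(0 <= j < n) u j)%E) = (\sum_(0 <= j < M) u j)%E.
Proof.
move=> h; apply: lim_near_cst => //.
near=> n.
have nM : (M <= n)%N by near: n; exists M.
rewrite (@big_cat_nat _ _ _ M 0 n _ _ (leq0n M) nM) /=.
have -> : (\sum_(M <= j < n) u j)%E = 0%E.
  by rewrite big_nat_cond big1 // => j /andP[/andP[Mj _] _]; apply: h.
by rewrite adde0.
Unshelve. all: by end_near.
Qed.

Definition fN (N : nat) (j : nat) : R -> R[i] := ef (j%:Z - N%:Z).

Lemma natC (b : bool) : ((b%:R : R) +i* 0) = (b%:R : R[i]).
Proof. by case: b. Qed.

Lemma ons_fN N : orthonormal_system (fN N).
Proof.
split; first by move=> j; exact: L2T_ef.
move=> j k; rewrite /fN l2_inner_ef -natC; congr (_%:R +i* _).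
by rewrite (inj_eq (addIr _)) eqz_nat.
Qed.

Definition KK : R := ((2 * pi)^-1 * aa) ^+ 2.

Lemma DN_fN N j t x : (j <= 2 * N)%N ->
  cabs (DN N (fN N j) t x) ^+ 2 = KK.
Proof.
move=> jN.
have jlt : (j < (2 * N).+1)%N by rewrite ltnS.
rewrite /DN (bigD1 (Ordinal jlt)) //= big1; last first.
  move=> k /eqP kj; rewrite /fN fourier_ef.
  have -> : (j%:Z - N%:Z == k%:Z - N%:Z) = false.
    rewrite (inj_eq (addIr _)) eqz_nat; apply/negP => /eqP jk.
    by apply: kj; apply: val_inj.
  rewrite mul0r.
  by rewrite (_ : (0 : R) +i* 0 = 0) ?mul0r.
rewrite /fN fourier_ef eqxx mul1r addr0.
set th := (_ + _ * _).
rewrite /cexpi ReC !mulcE cabs2 /KK.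
rewrite -[RHS]mulr1 -(cos2Dsin2 th).
ring.
Qed.

Definition lamN (N : nat) (j : nat) : R[i] := ((j <= 2 * N)%N%:R : R[i]).

Lemma density_fN N t x :
  density N (lamN N) (fN N) t x = (((2 * N).+1)%:R * KK) +i* 0.
Proof.
rewrite /density /csum.
have hu : forall j, lamN N j * ((cabs (DN N (fN N j) t x)) ^+ 2)%:C
                  = (((j <= 2 * N)%N%:R * KK) +i* 0).
  move=> j; rewrite /lamN; case: leqP => jN.
    by rewrite DN_fN // ReC -natC mulcE /= !mul1r !mul0r subr0 addr0.
  by rewrite -natC ReC mulcE /= !mul0r subr0 addr0.
congr (_ +i* _).
  rewrite (@limn_series_fin _ (2 * N).+1).
    rewrite big_nat_cond (eq_bigr (fun=> KK)); last first.
      by move=> j /andP[/andP[_ jN] _]; rewrite hu /= -ltnS jN mul1r.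
    by rewrite -big_nat_cond sumr_const_nat subn0 mulr_natl.
  by move=> j jN; rewrite hu /= leqNgt jN mul0r.
rewrite (@limn_series_fin _ 0).
  by rewrite big_geq.
by move=> j _; rewrite hu.
Qed.

Lemma lpow_sum_lamN N (beta : R) : beta != 0 ->
  lpow_sum beta (lamN N) = ((2 * N).+1)%:R%:E.
Proof.
move=> b0; rewrite /lpow_sum.
have hu : forall j, ((cabs (lamN N j)) `^ beta)%:E = ((j <= 2 * N)%N%:R)%:E.
  move=> j; rewrite /lamN -natC cabs_real ?ler0n //.
  by case: (j <= 2 * N)%N; rewrite ?powR1 ?powR0.
rewrite (@elimn_fin _ (2 * N).+1).
  rewrite (eq_bigr (fun j => ((j <= 2 * N)%N%:R)%:E)); last by move=> j _; rewrite hu.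
  rewrite -(big_morph (@EFin R) (fun x y => EFinD x y) (erefl 0%:E)).
  congr EFin.
  rewrite big_nat_cond (eq_bigr (fun=> 1)); last first.
    by move=> j /andP[/andP[_ jN] _]; rewrite -ltnS jN.
  by rewrite -big_nat_cond sumr_const_nat subn0.
by move=> j jN; rewrite hu leqNgt jN.
Qed.


Lemma key (s b K C : R) : 0 <= s -> 0 < b -> s + b^-1 < 1 -> 0 < K ->
  exists N : nat, (1 <= N)%N /\
    C * N%:R `^ s * ((2 * N).+1%:R `^ b^-1) < (2 * N).+1%:R * K.
Proof.
move=> s0 b0 sb K0.
set t := s + b^-1.
have t0 : 0 <= t by rewrite /t addr_ge0 // invr_ge0 ltW.
set e := 1 - t.
have e0 : 0 < e by rewrite /e subr_gt0.
case: (lerP C 0) => C0.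
  exists 1%N; split => //.
  apply: (le_lt_trans (y := 0)).
    by rewrite -mulrA mulr_le0_ge0 // mulr_ge0 // powR_ge0.
  by rewrite mulr_gt0 // ltr0n.
set Y := (C / K) `^ e^-1.
have Y0 : 0 <= Y by exact: powR_ge0.
set n0 := Num.Def.archi_bound Y.
have Yn0 := archi_boundP Y0.
exists n0.+1; split => //.
set X : R := (2 * n0.+1).+1%:R.
have X1 : 1 <= X by rewrite /X ler1n.
have X0 : 0 < X by apply: lt_le_trans X1.
have YX : Y < X.
  apply: (lt_le_trans Yn0); rewrite /X ler_nat; lia.
have hXe : C / K < X `^ e.
  have -> : C / K = Y `^ e by rewrite /Y -powRrM mulVf ?gt_eqF // powRr1 // divr_ge0 // ltW.
  have := @gt0_ltr_powR R e e0 Y X. rewrite !nnegrE => h. by apply: h => //; rewrite ltW.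
have hXt : X `^ e * X `^ t = X.
  rewrite -powRD; last by rewrite (gt_eqF X0) implybT.
  by rewrite /e subrK powRr1 // ltW.
have hNs : n0.+1%:R `^ s <= X `^ s.
  apply: ge0_ler_powR; rewrite // ?nnegrE ?ler0n ?ltW //.
  rewrite /X ltr_nat; lia.
have hXt' : X `^ s * X `^ b^-1 = X `^ t.
  by rewrite -powRD // (gt_eqF X0) implybT.
apply: (le_lt_trans (y := C * X `^ t)).
  rewrite -hXt' mulrA ler_wpM2r ?powR_ge0 // ler_wpM2l // ltW //.
rewrite -[X in _ < X * K]hXt.
rewrite mulrAC -mulrA.
have Xt0 : 0 < X `^ t by rewrite powR_gt0.
by rewrite mulrA ltr_pM2r // -ltr_pdivrMr.
Qed.


Lemma KK_gt0 : 0 < KK.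
Proof.
rewrite /KK exprn_gt0 // mulr_gt0 // ?invr_gt0 ?pi2_gt0 //.
by rewrite /aa sqrtr_gt0 invr_gt0 pi2_gt0.
Qed.

Lemma main_gen (p q : \bar R) (s beta C : R) :
  (0 < p)%E -> (0 < q)%E -> 0 <= s -> 0 < beta -> s + beta^-1 < 1 ->
  ~ (forall (N : nat), (1 <= N)%N ->
       forall lam : nat -> R[i], (lpow_sum beta lam < +oo)%E ->
       forall f : nat -> R -> R[i], orthonormal_system f ->
       (mixed_norm p q (fun t x => cabs (density N lam f t x))
          <= (C * N%:R `^ s)%:E * lnorm beta lam)%E).
Proof.
move=> p0 q0 s0 b0 sb hC.
have [N [N1 hN]] := @key s beta KK C s0 b0 sb KK_gt0.
have hl := @lpow_sum_lamN N beta (lt0r_neq0 b0).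
have := hC N N1 (lamN N) _ (fN N) (ons_fN N).
rewrite hl ltry => /(_ isT).
set V := (2 * N).+1%:R * KK.
have V0 : 0 <= V by rewrite mulr_ge0 ?ler0n // ltW // KK_gt0.
have -> : (fun t x => cabs (density N (lamN N) (fN N) t x)) = (fun _ _ => V).
  by apply/funext => t; apply/funext => x; rewrite density_fN cabs_real.
rewrite /mixed_norm.
have [w [hw Vw]] := @Lnorm_cst_ge q V q0 V0.
rewrite hw.
have w0 : 0 <= w by apply: le_trans Vw.
have [w2 [hw2 ww2]] := @Lnorm_cst_ge p w p0 w0.
rewrite hw2 /lnorm hl poweR_EFin -EFinM lee_fin => h.
have := le_trans Vw (le_trans ww2 h).
by rewrite leNgt hN.
Qed.

End S.

Local Close Scope complex_scope.

Theorem theorem1p7 (R : realType) :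
  (* (i) *)
  (forall (p : \bar R) (q beta : R),
      (0 < p)%E -> 1 <= q -> 2 * recip p + q^-1 = 1 ->
      2 * q / (q + 1) < beta ->
      ~ (exists C : R,
           forall (N : nat), (1 <= N)%N ->
           forall lam : nat -> R[i], (lpow_sum beta lam < +oo)%E ->
           forall f : nat -> R -> R[i], orthonormal_system f ->
           (mixed_norm p q%:E (fun t x => cabs (density N lam f t x))
              <= (C * N%:R `^ recip p)%:E * lnorm beta lam)%E)) /\
  (* (ii) *)
  (forall beta : R, 2 < beta ->
      ~ (exists C : R,
           forall (N : nat), (1 <= N)%N ->
           forall lam : nat -> R[i], (lpow_sum beta lam < +oo)%E ->
           forall f : nat -> R -> R[i], orthonormal_system f ->
           (mixed_norm 2%:E +oo (fun t x => cabs (density N lam f t x))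
              <= (C * N%:R `^ 2^-1)%:E * lnorm beta lam)%E)).
Proof.
split.
- move=> p q beta p0 q1 hpq hb [C hC].
  have q0 : 0 < q by apply: lt_le_trans q1.
  have qi1 : q^-1 <= 1 by rewrite invf_le1.
  have qi0 : 0 < q^-1 by rewrite invr_gt0.
  have c0 : 0 < 2 * q / (q + 1) by rewrite divr_gt0 ?mulr_gt0 ?addr_gt0.
  have b0 : 0 < beta by apply: lt_trans hb.
  have hbi : beta^-1 < (2 * q / (q + 1))^-1 by rewrite ltf_pV2.
  have hc : (2 * q / (q + 1))^-1 = (1 + q^-1) / 2.
    by field; rewrite ?gt_eqF // ?addr_gt0.
  rewrite hc in hbi.
  apply: (@main_gen R p q%:E (recip p) beta C p0 _ _ b0 _ hC).
  + by rewrite lte_fin.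
  + lra.
  + lra.
- move=> beta hb [C hC].
  have b0 : 0 < beta by apply: lt_trans hb.
  have hbi : beta^-1 < 2^-1 by rewrite ltf_pV2 ?posrE.
  apply: (@main_gen R 2%:E +oo (2^-1) beta C _ _ _ b0 _ hC); rewrite ?lte_fin ?ltry ?invr_ge0 //; lra.
Qed.
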